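(* Let $\Omega\subset\mathbb{R}^d$ be a bounded domain, $\kappa\in L^\infty(\Omega)$ with $\kappa\ge\kappa_0>0$, and $a(u,v)=\int_\Omega\kappa\nabla u\cdot\nabla v\,dx$, $\|u\|_a^2=a(u,u)$. Let $V_H\subset H^1_0(\Omega)$ be a finite-dimensional space with $V_H=V_{H,1}+V_{H,2}$ for subspaces $V_{H,1},V_{H,2}$. Let $\tau>0$, $N\ge 2$, and let $u_{H,1}^n\in V_{H,1}$, $u_{H,2}^n\in V_{H,2}$ ($n=0,\dots,N$), $u_H^n=u_{H,1}^n+u_{H,2}^n$, satisfy for $n=1,\dots,N-1$: $$(u_H^{n+1}-2u_H^n+u_H^{n-1},w)+\frac{\tau^2}{2}a(u_{H,1}^{n+1}+u_{H,1}^{n-1}+2u_{H,2}^n,w)=0\quad\forall w\in V_{H,1},$$ $$(u_H^{n+1}-2u_H^n+u_H^{n-1},w)+\tau^2a(u_{H,1}^{n}+u_{H,2}^n,w)=0\quad\forall w\in V_{H,2}.$$ Define for $n=0,\dots,N-1$ $$E^{n+\frac12}=\|u_H^{n+1}-u_H^n\|^2+\frac{\tau^2}{2}\sum_{i=1,2}\big(\|u_{H,i}^{n+1}\|_a^2+\|u_{H,i}^n\|_a^2\big)+\tau^2a(u_{H,2}^{n+1},u_{H,1}^n)+\tau^2a(u_{H,1}^{n+1},u_{H,2}^n)-\frac{\tau^2}{2}\|u_{H,2}^{n+1}-u_{H,2}^n\|_a^2.$$ Then $E^{n+\frac12}=E^{n-\frac12}$ for all $n=1,\dots,N-1$.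
   Context: $(\cdot,\cdot)$ and $\|\cdot\|$ denote the $L^2(\Omega)$ inner product and norm. The two equations form the partially explicit (implicit in $V_{H,1}$, explicit in $V_{H,2}$) time discretization of the wave equation $u_{tt}=\nabla\cdot(\kappa\nabla u)$ with homogeneous Dirichlet boundary conditions. *)

(* Defs.v *)
From HB Require Import structures.
From mathcomp Require Import all_boot all_order all_algebra.
From mathcomp Require Import reals.
Set Implicit Arguments. Unset Strict Implicit. Unset Printing Implicit Defensive.
Import Order.TTheory GRing.Theory Num.Theory.
Local Open Scope ring_scope.

Definition sym_bilinear (R : realFieldType) (V : lmodType R) (b : V -> V -> R) : Prop :=
  (forall u v, b u v = b v u) /\
  (forall (c : R) (u v w : V), b (c *: u + v) w = c * b u w + b v w).

Definition pos_def (R : realFieldType) (V : lmodType R) (b : V -> V -> R) : Prop :=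
  forall u, u != 0 -> 0 < b u u.

(* E^{n+1/2} with ip = L^2 inner product, a = energy form,
   u1 n = u_{H,1}^n, u2 n = u_{H,2}^n. *)
Definition energy (R : realFieldType) (V : lmodType R) (ip a : V -> V -> R)
  (tau : R) (u1 u2 : nat -> V) (n : nat) : R :=
  let u := fun k => u1 k + u2 k in
  ip (u n.+1 - u n) (u n.+1 - u n)
  + tau ^+ 2 / 2 * ((a (u1 n.+1) (u1 n.+1) + a (u1 n) (u1 n))
                    + (a (u2 n.+1) (u2 n.+1) + a (u2 n) (u2 n)))
  + tau ^+ 2 * a (u2 n.+1) (u1 n)
  + tau ^+ 2 * a (u1 n.+1) (u2 n)
  - tau ^+ 2 / 2 * a (u2 n.+1 - u2 n) (u2 n.+1 - u2 n).

(* Main.v *)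
Require Import Defs.
From HB Require Import structures.
From mathcomp Require Import all_boot all_order all_algebra.
From mathcomp Require Import reals.
Import Order.TTheory GRing.Theory Num.Theory.
Local Open Scope ring_scope.
From mathcomp Require Import ring lra.


Section Bil.
Variables (R : realFieldType) (V : lmodType R) (b : V -> V -> R).
Hypothesis Hb : sym_bilinear b.
Lemma bDl u v w : b (u + v) w = b u w + b v w.
Proof. by have := (proj2 Hb) 1 u v w; rewrite scale1r mul1r. Qed.
Lemma b0l w : b 0 w = 0.
Proof.
have := (proj2 Hb) 1 0 0 w; rewrite scale1r addr0 mul1r => /eqP.
by move=> /eqP h; lra.
Qed.
Lemma bZl c u w : b (c *: u) w = c * b u w.
Proof. by have := (proj2 Hb) c u 0 w; rewrite addr0 b0l addr0. Qed.
Lemma bNl u w : b (- u) w = - b u w.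
Proof. by rewrite -scaleN1r bZl mulN1r. Qed.
Lemma bDr u v w : b w (u + v) = b w u + b w v.
Proof. by rewrite (proj1 Hb) bDl !((proj1 Hb) w). Qed.
Lemma bZr c u w : b w (c *: u) = c * b w u.
Proof. by rewrite (proj1 Hb) bZl ((proj1 Hb) w). Qed.
Lemma bNr u w : b w (- u) = - b w u.
Proof. by rewrite (proj1 Hb) bNl ((proj1 Hb) w). Qed.
End Bil.
Arguments bDl {R V b}. Arguments bDr {R V b}. Arguments bNl {R V b}. Arguments bNr {R V b}. Arguments bZl {R V b}. Arguments bZr {R V b}.

Theorem mainTheorem1 (R : realType) (V : vectType R)
  (ip a : V -> V -> R)
  (Hip : sym_bilinear ip) (Hip_pd : pos_def ip)
  (Ha : sym_bilinear a) (Ha_pd : pos_def a)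
  (V1 V2 : {vspace V}) (HV : (V1 + V2)%VS = fullv)
  (tau : R) (Htau : 0 < tau) (N : nat) (HN : (2 <= N)%N)
  (u1 u2 : nat -> V)
  (Hu1 : forall n, (n <= N)%N -> u1 n \in V1)
  (Hu2 : forall n, (n <= N)%N -> u2 n \in V2)
  (Heq1 : forall n, (1 <= n)%N -> (n <= N.-1)%N ->
     forall w, w \in V1 ->
       ip ((u1 n.+1 + u2 n.+1) - 2%:R *: (u1 n + u2 n) + (u1 n.-1 + u2 n.-1)) w
       + tau ^+ 2 / 2 * a (u1 n.+1 + u1 n.-1 + 2%:R *: u2 n) w = 0)
  (Heq2 : forall n, (1 <= n)%N -> (n <= N.-1)%N ->
     forall w, w \in V2 ->
       ip ((u1 n.+1 + u2 n.+1) - 2%:R *: (u1 n + u2 n) + (u1 n.-1 + u2 n.-1)) w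
       + tau ^+ 2 * a (u1 n + u2 n) w = 0) :
  forall n, (1 <= n)%N -> (n <= N.-1)%N ->
    energy ip a tau u1 u2 n = energy ip a tau u1 u2 n.-1.
Proof.
move=> n h1 h2.
have l1 : (n.+1 <= N)%N by rewrite -(ltn_predK HN) ltnS.
have l2 : (n.-1 <= N)%N by apply: leq_trans (leq_pred n) (leq_trans h2 (leq_pred N)).
have E1 := Heq1 n h1 h2 (u1 n.+1 - u1 n.-1) (rpredB (Hu1 _ l1) (Hu1 _ l2)).
have E2 := Heq2 n h1 h2 (u2 n.+1 - u2 n.-1) (rpredB (Hu2 _ l1) (Hu2 _ l2)).
suff : energy ip a tau u1 u2 n - energy ip a tau u1 u2 n.-1 =
  (ip ((u1 n.+1 + u2 n.+1) - 2%:R *: (u1 n + u2 n) + (u1 n.-1 + u2 n.-1)) (u1 n.+1 - u1 n.-1)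
       + tau ^+ 2 / 2 * a (u1 n.+1 + u1 n.-1 + 2%:R *: u2 n) (u1 n.+1 - u1 n.-1)) +
  (ip ((u1 n.+1 + u2 n.+1) - 2%:R *: (u1 n + u2 n) + (u1 n.-1 + u2 n.-1)) (u2 n.+1 - u2 n.-1)
       + tau ^+ 2 * a (u1 n + u2 n) (u2 n.+1 - u2 n.-1)).
  by move=> h; lra.
rewrite /energy.
have -> : n.-1.+1 = n by case: n h1 {h2 E1 E2 l1 l2}.
move: (u1 n.+1) (u1 n) (u1 n.-1) (u2 n.+1) (u2 n) (u2 n.-1) => z1 y1 x1 z2 y2 x2.
rewrite !(bDl Hip, bDr Hip, bNl Hip, bNr Hip, bZl Hip, bZr Hip).
rewrite !(bDl Ha, bDr Ha, bNl Ha, bNr Ha, bZl Ha, bZr Ha).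
have Si := proj1 Hip; have Sa := proj1 Ha.
move: (tau ^+ 2) => t.
rewrite ?(Si y1 z1) ?(Si x1 z1) ?(Si z2 z1) ?(Si y2 z1) ?(Si x2 z1).
rewrite ?(Si x1 y1) ?(Si z2 y1) ?(Si y2 y1) ?(Si x2 y1).
rewrite ?(Si z2 x1) ?(Si y2 x1) ?(Si x2 x1).
rewrite ?(Si y2 z2) ?(Si x2 z2) ?(Si x2 y2).
rewrite ?(Sa y1 z1) ?(Sa x1 z1) ?(Sa z2 z1) ?(Sa y2 z1) ?(Sa x2 z1).
rewrite ?(Sa x1 y1) ?(Sa z2 y1) ?(Sa y2 y1) ?(Sa x2 y1).
rewrite ?(Sa z2 x1) ?(Sa y2 x1) ?(Sa x2 x1).
rewrite ?(Sa y2 z2) ?(Sa x2 z2) ?(Sa x2 y2).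
by field.
Qed.
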